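(* Every connected extended representation graph for $E$ that contains a source is isomorphic to $(F_v,\phi_v)$ for some $v\in E^0$.
   Context: $E=(E^0,E^1,s,r)$ is a row-finite directed graph; for each vertex $v$ emitting an edge a fixed edge $e^v\in s^{-1}(v)$ is called special, others nonspecial. The double graph $E_d$ has vertices $E^0$ and edges $e$ (real) and $e^*$ (ghost) for $e\in E^1$, with $s_d(e)=s(e),r_d(e)=r(e),s_d(e^* )=r(e),r_d(e^* )=s(e)$. Paths of length $0$ are vertices. For a path $p=e_1\dots e_n$ set $p^*=e_n^*\dots e_1^*$. The set $X$ of basis paths consists of the paths in $E_d$: vertices; $p,p^*$ for paths $p$ of length $\ge1$ in $E$; $pq^*$ with $p=e_1\dots e_k,q=f_1\dots f_n$ of length $\ge1$ in $E$, $r(p)=r(q)$, and $e_k\ne f_n$ or $e_k=f_n$ nonspecial. $X_v=\{x\in X: s_d(x)=v\}$. An extended representation graph for $E$ is a pair $(F,\phi)$, $F$ a directed graph, $\phi:F\to E_d$ a graph homomorphism, such that for every $w\in F^0$: (i) $w$ is a source (receives no edge) or receives exactly one edge $f_w$; (ii) if $w$ is a source or $\phi(f_w)$ is a nonspecial real edge, $\phi$ maps $s^{-1}(w)$ bijectively onto $s_d^{-1}(\phi(w))$; (iii) if $\phi(f_w)$ is a special real edge, onto $s_d^{-1}(\phi(w))\setminus\{\phi(f_w)^*\}$; (iv) if $\phi(f_w)$ is a ghost edge, onto the ghost edges in $s_d^{-1}(\phi(w))$. An isomorphism $(F,\phi)\to(G,\psi)$ is a graph isomorphism $\alpha$ with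 $\psi\circ\alpha=\phi$. $F$ is connected if any two vertices are joined by a path when edge directions are ignored. $(F_v,\phi_v)$ for $v\in E^0$: vertices $w_x$ ($x\in X_v$), edges $f_x$ ($x\in X_v\setminus\{v\}$) from $w_{x'}$ to $w_x$ where $x'$ is $x$ with its last edge removed ($x'=v$ if $|x|=1$); $\phi_v(w_x)=r_d(x)$, $\phi_v(f_x)=$ last edge of $x$. *)

(* Defs.v *)
From Stdlib Require Import List Relation_Operators.
Import ListNotations.

Set Implicit Arguments.
Unset Strict Implicit.

Record graph := Graph {
  vert : Type;
  edge : Type;
  src : edge -> vert;
  rng : edge -> vert
}.
Arguments src {_} _.
Arguments rng {_} _.

Definition row_finite (E : graph) : Prop :=
  forall v : vert E, exists l : list (edge E),
    forall e : edge E, src e = v <-> In e l.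

Definition special_choice (E : graph) (sp : vert E -> option (edge E)) : Prop :=
  forall v : vert E, (exists e, src e = v) ->
    exists e, sp v = Some e /\ src e = v.

Definition special (E : graph) (sp : vert E -> option (edge E)) (e : edge E)
  : Prop := sp (src e) = Some e.

(** The double graph E_d: real edges [inl e], ghost edges [inr e] (= e^* ). *)
Definition dedge (E : graph) : Type := (edge E + edge E)%type.

Definition sd (E : graph) (d : dedge E) : vert E :=
  match d with inl e => src e | inr e => rng e end.
Definition rd (E : graph) (d : dedge E) : vert E :=
  match d with inl e => rng e | inr e => src e end.

Definition double_graph (E : graph) : graph :=
  @Graph (vert E) (dedge E) (@sd E) (@rd E).

(** Paths in E_d starting at a vertex [v], given as the list of their edges
    (a path of length 0 is the vertex [v] itself). *)
Fixpoint dwalk (E : graph) (v : vert E) (l : list (dedge E)) : Prop :=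
  match l with
  | [] => True
  | d :: l' => sd d = v /\ dwalk (rd d) l'
  end.

Fixpoint dend (E : graph) (v : vert E) (l : list (dedge E)) : vert E :=
  match l with
  | [] => v
  | d :: l' => dend (rd d) l'
  end.

(** Note q^* = f_n^* ... f_1^*,
    i.e. [map inr (rev q)]; the path conditions on p, q and r(p) = r(q)
    are exactly the walk condition of the concatenation. *)
Definition basis (E : graph) (sp : vert E -> option (edge E))
    (v : vert E) (l : list (dedge E)) : Prop :=
  dwalk v l /\
  exists p q : list (edge E),
    l = map inl p ++ map inr (rev q) /\
    (forall (p0 q0 : list (edge E)) (e f : edge E),
        p = p0 ++ [e] -> q = q0 ++ [f] -> e <> f \/ ~ special sp e).

Lemma dwalk_app (E : graph) (v : vert E) (l1 l2 : list (dedge E)) :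
  dwalk v (l1 ++ l2) -> dwalk v l1.
Proof.
  revert v; induction l1 as [|d l1 IH]; simpl; intros v H; [exact I|].
  destruct H as [H1 H2]; split; [exact H1| exact (IH _ H2)].
Qed.

Lemma map_inl_inr (A : Type) (p1 p2 : list A) (q1 q2 : list A) :
  map (@inl A A) p1 ++ map (@inr A A) q1 = map inl p2 ++ map inr q2 ->
  p1 = p2 /\ q1 = q2.
Proof.
  revert p2; induction p1 as [|a p1 IH]; intros [|b p2]; simpl; intro H.
  - split; [reflexivity|]. revert q2 H; induction q1 as [|x q1 IHq];
      intros [|y q2]; simpl; intro H; try discriminate; auto.
    injection H; intros H1 H2; subst; f_equal; auto.
  - destruct q1; discriminate.
  - destruct q2; discriminate.
  - injection H; intros H1 H2; subst. destruct (IH _ H1); subst; auto.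
Qed.

Lemma basis_prefix (E : graph) (sp : vert E -> option (edge E))
    (v : vert E) (l : list (dedge E)) (d : dedge E) :
  basis sp v (l ++ [d]) -> basis sp v l.
Proof.
  intros [Hw [p [q [Hl Hc]]]]. split; [exact (dwalk_app Hw)|].
  destruct q as [|f1 q'].
  -
    simpl in Hl. rewrite app_nil_r in Hl.
    destruct p as [|e p'] using rev_ind.
    + destruct l; discriminate.
    + rewrite map_app in Hl. simpl in Hl. apply app_inj_tail in Hl.
      destruct Hl as [Hl _]. exists p', []. split.
      * rewrite Hl. simpl. now rewrite app_nil_r.
      * intros p0 q0 e0 f0 _ Hq. destruct q0; discriminate.
  - (* q = f1 :: q' : the last edge of l ++ [d] is f1^* *)
    simpl in Hl. rewrite map_app, app_assoc in Hl. simpl in Hl.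
    apply app_inj_tail in Hl. destruct Hl as [Hl _].
    exists p, q'. split; [exact Hl|].
    intros p0 q0 e0 f0 Hp Hq. apply (Hc p0 (f1 :: q0) e0 f0 Hp).
    rewrite Hq. reflexivity.
Qed.

Definition bij_onto (A B : Type) (f : A -> B) (P : A -> Prop) (Q : B -> Prop)
  : Prop :=
  (forall a, P a -> Q (f a)) /\
  (forall a1 a2, P a1 -> P a2 -> f a1 = f a2 -> a1 = a2) /\
  (forall b, Q b -> exists a, P a /\ f a = b).

Record rep_pair (E : graph) := RepPair {
  rgraph : graph;
  phi0 : vert rgraph -> vert E;
  phi1 : edge rgraph -> dedge E
}.
Arguments rgraph {E} _.
Arguments phi0 {E} _ _.
Arguments phi1 {E} _ _.

Definition is_hom (E : graph) (X : rep_pair E) : Prop :=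
  forall f : edge (rgraph X),
    sd (phi1 X f) = phi0 X (src f) /\ rd (phi1 X f) = phi0 X (rng f).

Definition is_ghost (E : graph) (d : dedge E) : Prop :=
  match d with inl _ => False | inr _ => True end.

Definition ext_rep_graph (E : graph) (sp : vert E -> option (edge E))
    (X : rep_pair E) : Prop :=
  is_hom X /\
  forall w : vert (rgraph X),
    ((forall f : edge (rgraph X), rng f <> w) \/
     (exists f, rng f = w /\ forall g, rng g = w -> g = f)) /\
    ((forall f : edge (rgraph X), rng f <> w) ->
       bij_onto (phi1 X) (fun g => src g = w)
                (fun d => sd d = phi0 X w)) /\
    (forall fw : edge (rgraph X), rng fw = w ->
       (forall g, rng g = w -> g = fw) ->
       (forall e, phi1 X fw = inl e -> ~ special sp e ->
          bij_onto (phi1 X) (fun g => src g = w)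
                   (fun d => sd d = phi0 X w)) /\
       (forall e, phi1 X fw = inl e -> special sp e ->
          bij_onto (phi1 X) (fun g => src g = w)
                   (fun d => sd d = phi0 X w /\ d <> inr e)) /\
       (forall e, phi1 X fw = inr e ->
          bij_onto (phi1 X) (fun g => src g = w)
                   (fun d => sd d = phi0 X w /\ is_ghost d))).

Definition adj (G : graph) (w w' : vert G) : Prop :=
  exists f : edge G, (src f = w /\ rng f = w') \/ (src f = w' /\ rng f = w).

Definition connected (G : graph) : Prop :=
  forall w w' : vert G, clos_refl_trans (vert G) (@adj G) w w'.

Definition has_source (G : graph) : Prop :=
  exists w : vert G, forall f : edge G, rng f <> w.

Definition rep_iso (E : graph) (X Y : rep_pair E) : Prop :=
  exists (a0 : vert (rgraph X) -> vert (rgraph Y))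
         (b0 : vert (rgraph Y) -> vert (rgraph X))
         (a1 : edge (rgraph X) -> edge (rgraph Y))
         (b1 : edge (rgraph Y) -> edge (rgraph X)),
    (forall w, b0 (a0 w) = w) /\ (forall w, a0 (b0 w) = w) /\
    (forall f, b1 (a1 f) = f) /\ (forall f, a1 (b1 f) = f) /\
    (forall f, src (a1 f) = a0 (src f)) /\
    (forall f, rng (a1 f) = a0 (rng f)) /\
    (forall w, phi0 Y (a0 w) = phi0 X w) /\
    (forall f, phi1 Y (a1 f) = phi1 X f).

(** Edges f_x, for x in X_v \ {v}: encoded as pairs (x', d) with x = x' ++ [d]
    (so x' is x with its last edge d removed); f_x goes from w_{x'} to w_x. *)
Section Fv.
Variables (E : graph) (sp : vert E -> option (edge E)) (v : vert E).

Definition Fv_vert : Type := { l : list (dedge E) | basis sp v l }.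
Definition Fv_edge : Type :=
  { p : list (dedge E) * dedge E | basis sp v (fst p ++ [snd p]) }.

Definition Fv_src (f : Fv_edge) : Fv_vert :=
  exist _ (fst (proj1_sig f)) (basis_prefix (proj2_sig f)).
Definition Fv_rng (f : Fv_edge) : Fv_vert :=
  exist _ (fst (proj1_sig f) ++ [snd (proj1_sig f)]) (proj2_sig f).

Definition Fv_graph : graph := @Graph Fv_vert Fv_edge Fv_src Fv_rng.

Definition Fv : rep_pair E :=
  @RepPair E Fv_graph
    (fun x : Fv_vert => dend v (proj1_sig x))
    (fun f : Fv_edge => snd (proj1_sig f)).
End Fv.

(* Main.v *)
Require Import Defs.
From Stdlib Require Import List Relation_Operators Classical ClassicalEpsilon ProofIrrelevance.
Import ListNotations.
Set Implicit Arguments.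
Unset Strict Implicit.

Definition okpair (E : graph) (sp : vert E -> option (edge E)) (a b : dedge E) : Prop :=
  match a, b with
  | inr _, inl _ => False
  | inl e, inr f => e <> f \/ ~ special sp e
  | _, _ => True
  end.

Fixpoint good (E : graph) (sp : vert E -> option (edge E)) (l : list (dedge E)) : Prop :=
  match l with
  | [] => True
  | a :: t => (match t with [] => True | b :: _ => okpair sp a b end) /\ good sp t
  end.

Lemma snoc_cases (A : Type) (l : list A) : l = [] \/ exists x d, l = x ++ [d].
Proof. induction l using rev_ind; eauto. Qed.

Lemma good_snoc (E : graph) (sp : vert E -> option (edge E)) (x : list (dedge E)) d :
  good sp (x ++ [d]) <-> good sp x /\ (forall x' a, x = x' ++ [a] -> okpair sp a d).
Proof.
  induction x as [|a t IH].
  - simpl. split.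
    + intros _. split; [exact I|]. intros x' a H. destruct x'; discriminate.
    + intros _. split; exact I.
  - destruct t as [|b t'].
    + simpl. split.
      * intros [H _]. split; [split; exact I|].
        intros x' a' Hx. destruct x' as [|c x'']; simpl in Hx.
        -- injection Hx; intros; subst; exact H.
        -- injection Hx; intros Hx' _. destruct x''; discriminate.
      * intros [_ H]. split; [apply (H []); reflexivity| split; exact I].
    + change (((b :: t') ++ [d])) with (b :: (t' ++ [d])).
      simpl. simpl in IH. split.
      * intros [Hab Hg]. apply IH in Hg. destruct Hg as [Hg Hl].
        split; [split; assumption|].
        intros x' a' Hx. destruct x' as [|c x'']; simpl in Hx.
        -- injection Hx; intros Hx' _. destruct t'; discriminate.
        -- injection Hx; intros Hx' _. apply (Hl x'' a' Hx').
      * intros [[Hab Hg] Hl]. split; [exact Hab|]. apply IH. split; [exact Hg|].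
        intros x' a' Hx. apply (Hl (a :: x')). rewrite Hx. reflexivity.
Qed.

Lemma good_pr (E : graph) (sp : vert E -> option (edge E)) (p r : list (edge E)) :
  (forall p0 e f r0, p = p0 ++ [e] -> r = f :: r0 -> e <> f \/ ~ special sp e) ->
  good sp (map inl p ++ map inr r).
Proof.
  revert r. induction p as [|e p IH]; intros r Hc.
  - simpl. clear Hc. induction r as [|f r IHr]; simpl; [exact I|]. split; [|exact IHr].
    destruct r; exact I.
  - simpl. split.
    + destruct p as [|e' p'].
      * simpl. destruct r as [|f r0]; [exact I|]. simpl. apply (Hc [] e f r0); reflexivity.
      * exact I.
    + apply IH. intros p0 e0 f r0 H1 H2. apply (Hc (e :: p0) e0 f r0); [rewrite H1; reflexivity| exact H2].
Qed.

Lemma good_split (E : graph) (sp : vert E -> option (edge E)) (l : list (dedge E)) :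
  good sp l -> exists p r, l = map inl p ++ map inr r /\
    (forall p0 e f r0, p = p0 ++ [e] -> r = f :: r0 -> e <> f \/ ~ special sp e).
Proof.
  induction l as [|a t IH]; intros Hg.
  - exists [], []. split; [reflexivity|]. intros p0 e f r0 H. destruct p0; discriminate.
  - destruct Hg as [Hh Hg]. destruct (IH Hg) as [p [r [Ht Hc]]].
    destruct a as [e|f].
    + exists (e :: p), r. split; [rewrite Ht; reflexivity|].
      intros p0 e0 f r0 H1 H2. destruct p0 as [|e1 p0']; simpl in H1.
      * injection H1; intros Hp He; subst. simpl in Hh. exact Hh.
      * injection H1; intros Hp _. exact (Hc p0' e0 f r0 Hp H2).
    + destruct p as [|e p'].
      * exists [], (f :: r). split; [rewrite Ht; reflexivity|].
        intros p0 e0 f0 r0 H. destruct p0; discriminate.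
      * rewrite Ht in Hh. simpl in Hh. destruct Hh.
Qed.

Lemma basis_good (E : graph) (sp : vert E -> option (edge E)) v l :
  basis sp v l <-> dwalk v l /\ good sp l.
Proof.
  split.
  - intros [Hw [p [q [Hl Hc]]]]. split; [exact Hw|]. rewrite Hl. apply good_pr.
    intros p0 e f r0 H1 H2. apply (Hc p0 (rev r0) e f H1).
    rewrite <- (rev_involutive q), H2. reflexivity.
  - intros [Hw Hg]. split; [exact Hw|]. destruct (good_split Hg) as [p [r [Hl Hc]]].
    exists p, (rev r). rewrite rev_involutive. split; [exact Hl|].
    intros p0 q0 e f H1 H2. apply (Hc p0 e f (rev q0) H1).
    rewrite <- (rev_involutive r), H2, rev_app_distr. reflexivity.
Qed.

Lemma dwalk_snoc (E : graph) (v : vert E) x d :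
  dwalk v (x ++ [d]) <-> dwalk v x /\ sd d = dend v x.
Proof.
  revert v; induction x as [|a x IH]; intros v; simpl.
  - tauto.
  - rewrite IH. tauto.
Qed.

Lemma dend_snoc (E : graph) (v : vert E) x d : dend v (x ++ [d]) = rd d.
Proof. revert v; induction x as [|a x IH]; intros v; simpl; auto. Qed.

Lemma basis_snoc (E : graph) (sp : vert E -> option (edge E)) v x d :
  basis sp v (x ++ [d]) <->
  basis sp v x /\ sd d = dend v x /\ (forall x' a, x = x' ++ [a] -> okpair sp a d).
Proof.
  rewrite !basis_good, dwalk_snoc, good_snoc. tauto.
Qed.

Lemma bij_ext (A B : Type) (f : A -> B) (P : A -> Prop) (Q Q' : B -> Prop) :
  bij_onto f P Q -> (forall b, Q b <-> Q' b) -> bij_onto f P Q'.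
Proof.
  intros [H1 [H2 H3]] HQ. split; [|split].
  - intros a Ha. apply HQ. auto.
  - exact H2.
  - intros b Hb. apply HQ in Hb. auto.
Qed.

Inductive Lift (E : graph) (X : rep_pair E) (w0 : vert (rgraph X))
  : list (dedge E) -> vert (rgraph X) -> Prop :=
| Lift_nil : Lift w0 [] w0
| Lift_snoc : forall x g, Lift w0 x (src g) -> Lift w0 (x ++ [phi1 X g]) (rng g).


Lemma in_uniq (E : graph) sp (X : rep_pair E) (Hext : ext_rep_graph sp X) (g1 g2 : edge (rgraph X)) :
  rng g1 = rng g2 -> g1 = g2.
Proof.
  intros H. destruct Hext as [_ Hw]. destruct (Hw (rng g1)) as [[Hs|[f [Hf Hu]]] _].
  - exfalso; exact (Hs g1 eq_refl).
  - rewrite (Hu g1 eq_refl), (Hu g2 (eq_sym H)). reflexivity.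
Qed.

Lemma local (E : graph) sp (X : rep_pair E) (Hext : ext_rep_graph sp X) (w : vert (rgraph X)) :
  ((forall f, rng f <> w) /\
     bij_onto (phi1 X) (fun g => src g = w) (fun d => sd d = phi0 X w)) \/
  (exists fw, rng fw = w /\
     bij_onto (phi1 X) (fun g => src g = w)
       (fun d => sd d = phi0 X w /\ okpair sp (phi1 X fw) d)).
Proof.
  destruct Hext as [_ Hw]. destruct (Hw w) as [[Hs|[f [Hf Hu]]] [Hsrc Hone]].
  - left. split; auto.
  - right. exists f. split; [exact Hf|].
    destruct (Hone f Hf Hu) as [Hn [Hspc Hg]].
    destruct (phi1 X f) as [e|e] eqn:E1.
    + destruct (classic (special sp e)) as [Hse|Hse].
      * apply (bij_ext (Hspc e eq_refl Hse)). intros b. split.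
        -- intros [H1 H2]. split; [exact H1|]. destruct b as [b|b]; simpl; [exact I|].
           left. intro; subst. apply H2; reflexivity.
        -- intros [H1 H2]. split; [exact H1|]. destruct b as [b|b]; [discriminate|].
           simpl in H2. intro Hb. injection Hb; intro; subst. tauto.
      * apply (bij_ext (Hn e eq_refl Hse)). intros b. split.
        -- intros H1. split; [exact H1|]. destruct b; simpl; tauto.
        -- tauto.
    + apply (bij_ext (Hg e eq_refl)). intros b. destruct b; simpl; tauto.
Qed.

Lemma out_inj (E : graph) sp (X : rep_pair E) (Hext : ext_rep_graph sp X) (g1 g2 : edge (rgraph X)) :
  src g1 = src g2 -> phi1 X g1 = phi1 X g2 -> g1 = g2.
Proof.
  intros H1 H2. destruct (local Hext (src g1)) as [[_ [_ [Hi _]]]|[fw [_ [_ [Hi _]]]]];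
    apply Hi; auto.
Qed.

Lemma Lift_inv (E : graph) (X : rep_pair E) w0 l w :
  Lift w0 l w -> (l = [] -> w = w0) /\
    (forall x d, l = x ++ [d] -> exists g, Lift w0 x (src g) /\ phi1 X g = d /\ rng g = w).
Proof.
  intros H. destruct H as [|x0 g H].
  - split; [reflexivity|]. intros x d Hx. destruct x; discriminate.
  - split.
    + intros Hx. destruct x0; discriminate.
    + intros x d Hx. apply app_inj_tail in Hx. destruct Hx as [Hx Hd]; subst.
      exists g. auto.
Qed.

Lemma Lift_phi0 (E : graph) sp (X : rep_pair E) (Hext : ext_rep_graph sp X) (w0 : vert (rgraph X)) x w :
  Lift w0 x w -> phi0 X w = dend (phi0 X w0) x.
Proof.
  induction 1 as [|x g H IH]; [reflexivity|].
  rewrite dend_snoc. destruct Hext as [Hh _]. destruct (Hh g) as [_ Hr]. auto.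
Qed.

Lemma Lift_fun (E : graph) sp (X : rep_pair E) (Hext : ext_rep_graph sp X) (w0 : vert (rgraph X)) x w1 :
  Lift w0 x w1 -> forall w2, Lift w0 x w2 -> w1 = w2.
Proof.
  induction 1 as [|x g H IH]; intros w2 H2.
  - symmetry. apply (proj1 (Lift_inv H2)). reflexivity.
  - destruct (proj2 (Lift_inv H2) x (phi1 X g) eq_refl) as [g' [H1 [Hp Hr]]].
    rewrite <- Hr. f_equal. apply (out_inj Hext); [|auto]. apply IH; exact H1.
Qed.

Lemma Lift_inj (E : graph) sp (X : rep_pair E) (Hext : ext_rep_graph sp X) (w0 : vert (rgraph X))
  (Hs0 : forall f, rng f <> w0) x w :
  Lift w0 x w -> forall y, Lift w0 y w -> x = y.
Proof.
  induction 1 as [|x g H IH]; intros y H2.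
  - destruct (snoc_cases y) as [->|[y' [d ->]]]; [reflexivity|].
    destruct (proj2 (Lift_inv H2) y' d eq_refl) as [g' [_ [_ Hr]]].
    exfalso; exact (Hs0 g' Hr).
  - destruct (snoc_cases y) as [->|[y' [d ->]]].
    + exfalso. apply (Hs0 g). apply (proj1 (Lift_inv H2)). reflexivity.
    + destruct (proj2 (Lift_inv H2) y' d eq_refl) as [g' [H1 [Hp Hr]]].
      assert (g' = g) by (apply (in_uniq Hext); exact Hr). subst g'.
      rewrite (IH y' H1), Hp. reflexivity.
Qed.

Lemma Lift_step (E : graph) sp (X : rep_pair E) (Hext : ext_rep_graph sp X) (w0 : vert (rgraph X))
  (Hs0 : forall f, rng f <> w0) x w d :
  Lift w0 x w -> basis sp (phi0 X w0) (x ++ [d]) ->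
  exists g, src g = w /\ phi1 X g = d.
Proof.
  intros HL HB. apply basis_snoc in HB. destruct HB as [_ [Hsd Hok]].
  rewrite <- (Lift_phi0 Hext HL) in Hsd.
  destruct (local Hext w) as [[_ [_ [_ Hsur]]]|[fw [Hfw [_ [_ Hsur]]]]].
  - destruct (Hsur d Hsd) as [g [H1 H2]]. eauto.
  - destruct (snoc_cases x) as [->|[x' [a ->]]].
    + exfalso. apply (Hs0 fw). rewrite Hfw. apply (proj1 (Lift_inv HL)). reflexivity.
    + destruct (proj2 (Lift_inv HL) x' a eq_refl) as [g0 [_ [Hp Hr]]].
      assert (g0 = fw) by (apply (in_uniq Hext); congruence). subst g0.
      assert (Ho := Hok x' a eq_refl). rewrite <- Hp in Ho.
      destruct (Hsur d (conj Hsd Ho)) as [g [H1 H2]]. eauto.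
Qed.

Lemma Lift_exists (E : graph) sp (X : rep_pair E) (Hext : ext_rep_graph sp X) (w0 : vert (rgraph X))
  (Hs0 : forall f, rng f <> w0) x :
  basis sp (phi0 X w0) x -> exists w, Lift w0 x w.
Proof.
  induction x as [|d x IH] using rev_ind; intros HB.
  - exists w0. constructor.
  - destruct (IH (basis_prefix HB)) as [w HL].
    destruct (Lift_step Hext Hs0 HL HB) as [g [H1 H2]]. subst w d.
    exists (rng g). constructor. exact HL.
Qed.

Lemma step_basis (E : graph) sp (X : rep_pair E) (Hext : ext_rep_graph sp X) (w0 : vert (rgraph X))
  (Hs0 : forall f, rng f <> w0) x (f : edge (rgraph X)) :
  basis sp (phi0 X w0) x -> Lift w0 x (src f) -> basis sp (phi0 X w0) (x ++ [phi1 X f]).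
Proof.
  intros HB HL. apply basis_snoc. split; [exact HB|]. split.
  - rewrite <- (Lift_phi0 Hext HL). destruct Hext as [Hh _]. apply (Hh f).
  - intros x' a Hx. subst x.
    destruct (proj2 (Lift_inv HL) x' a eq_refl) as [g0 [_ [Hp Hr]]].
    destruct (local Hext (src f)) as [[Hs _]|[fw [Hfw [Hin _]]]].
    + exfalso; exact (Hs g0 Hr).
    + assert (g0 = fw) by (apply (in_uniq Hext); congruence). subst g0.
      rewrite <- Hp. exact (proj2 (Hin f eq_refl)).
Qed.

Lemma Reach (E : graph) sp (X : rep_pair E) (Hext : ext_rep_graph sp X) (w0 : vert (rgraph X))
  (Hs0 : forall f, rng f <> w0) (Hc : connected (rgraph X)) (w : vert (rgraph X)) :
  exists x, basis sp (phi0 X w0) x /\ Lift w0 x w.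
Proof.
  set (S := fun w => exists x, basis sp (phi0 X w0) x /\ Lift w0 x w).
  assert (HE : forall f : edge (rgraph X), S (src f) <-> S (rng f)).
  { intros f. split.
    - intros [x [HB HL]]. exists (x ++ [phi1 X f]). split.
      + exact (step_basis Hext Hs0 HB HL).
      + constructor. exact HL.
    - intros [x [HB HL]]. destruct (snoc_cases x) as [->|[x' [d ->]]].
      + exfalso. apply (Hs0 f). apply (proj1 (Lift_inv HL)). reflexivity.
      + destruct (proj2 (Lift_inv HL) x' d eq_refl) as [g [H1 [_ Hr]]].
        assert (g = f) by (apply (in_uniq Hext); exact Hr). subst g.
        exists x'. split; [exact (basis_prefix HB)| exact H1]. }
  assert (HC : forall a b, clos_refl_trans _ (@adj (rgraph X)) a b -> (S a <-> S b)).
  { induction 1 as [a b [f [[H1 H2]|[H1 H2]]]| a | a b c _ IH1 _ IH2].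
    - subst. apply HE.
    - subst. symmetry. apply HE.
    - reflexivity.
    - rewrite IH1. exact IH2. }
  apply (HC w0 w (Hc w0 w)). exists []. split; [|constructor].
  split; [exact I|]. exists [], []. split; [reflexivity|].
  intros p0 q0 e f H. destruct p0; discriminate.
Qed.

Lemma sig_eq (A : Type) (P : A -> Prop) (a b : sig P) : proj1_sig a = proj1_sig b -> a = b.
Proof.
  destruct a as [a Ha], b as [b Hb]; simpl; intros ->. f_equal. apply proof_irrelevance.
Qed.

Unset Implicit Arguments.

Theorem proposition5p6 (E : graph) (sp : vert E -> option (edge E))
  (HE : row_finite E) (Hsp : special_choice sp) (X : rep_pair E) :
  ext_rep_graph sp X -> connected (rgraph X) -> has_source (rgraph X) ->
  exists v : vert E, rep_iso X (Fv sp v).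
Proof.
  intros Hext Hc [w0 Hs0]. exists (phi0 X w0). set (v := phi0 X w0).
  assert (A0 : forall w : vert (rgraph X), {x | basis sp v x /\ Lift w0 x w}).
  { intros w. apply constructive_indefinite_description. exact (Reach Hext Hs0 Hc w). }
  assert (B0 : forall x : Fv_vert sp v, {w | Lift w0 (proj1_sig x) w}).
  { intros x. apply constructive_indefinite_description.
    exact (Lift_exists Hext Hs0 (proj2_sig x)). }
  assert (B1 : forall e : Fv_edge sp v,
             {g | Lift w0 (fst (proj1_sig e)) (src g) /\ phi1 X g = snd (proj1_sig e)}).
  { intros e. apply constructive_indefinite_description.
    destruct (Lift_exists Hext Hs0 (basis_prefix (proj2_sig e))) as [w HL].
    destruct (Lift_step Hext Hs0 HL (proj2_sig e)) as [g [H1 H2]].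
    exists g. subst w. auto. }
  pose (a0 := fun w => exist (basis sp v) (proj1_sig (A0 w)) (proj1 (proj2_sig (A0 w)))).
  pose (a1 := fun f : edge (rgraph X) =>
     exist (fun p => basis sp v (fst p ++ [snd p])) (proj1_sig (A0 (src f)), phi1 X f)
       (step_basis Hext Hs0 (proj1 (proj2_sig (A0 (src f)))) (proj2 (proj2_sig (A0 (src f)))))).
  exists (a0 : vert (rgraph X) -> vert (rgraph (Fv sp v))),
         (fun x => proj1_sig (B0 x)),
         (a1 : edge (rgraph X) -> edge (rgraph (Fv sp v))),
         (fun e => proj1_sig (B1 e)).
  split; [|split; [|split; [|split; [|split; [|split; [|split]]]]]].
  - intros w. destruct (B0 (a0 w)) as [w' Hw']. simpl in *.
    destruct (A0 w) as [x [HB HL]]. simpl in *.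
    exact (Lift_fun Hext Hw' HL).
  - intros x. destruct (B0 x) as [w Hw]. simpl. apply sig_eq. unfold a0. simpl.
    destruct (A0 w) as [y [HB HL]]. simpl. exact (Lift_inj Hext Hs0 HL Hw).
  - intros f. destruct (B1 (a1 f)) as [g [H1 H2]]. simpl in *.
    destruct (A0 (src f)) as [x [HB HL]]. simpl in *.
    apply (out_inj Hext); [|exact H2]. exact (Lift_fun Hext H1 HL).
  - intros e. destruct (B1 e) as [g [H1 H2]]. simpl. apply sig_eq. unfold a1. simpl.
    destruct (A0 (src g)) as [y [HB HL]]. simpl.
    rewrite (Lift_inj Hext Hs0 HL H1), H2. destruct (proj1_sig e); reflexivity.
  - intros f. apply sig_eq. reflexivity.
  - intros f. apply sig_eq. simpl. unfold a0. simpl.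
    destruct (A0 (src f)) as [x [HB HL]]. simpl.
    destruct (A0 (rng f)) as [y [HB' HL']]. simpl.
    apply (Lift_inj Hext Hs0 (Lift_snoc HL) HL').
  - intros w. simpl. destruct (A0 w) as [x [HB HL]]. simpl.
    symmetry. exact (Lift_phi0 Hext HL).
  - intros f. reflexivity.
Qed.
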